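(* Let $V$ be a real vector space of finite even dimension with nondegenerate quadratic form $Q$, and let $\sigma$ be an admissible real structure on $\mathbb{C}l(V)$. Let $V_+=V\cap V_\sigma$ and $V_-=V\cap iV_\sigma$. The following are equivalent: (1) $Q$ is positive definite on $V_+$ and negative definite on $V_-$; (2) the quadratic form $Q_\sigma$ on $V$ is positive definite; (3) the restriction of $Q$ to $V_\sigma$ is positive definite; (4) the $\sigma$-product $(\cdot,\cdot)_\sigma$ is positive definite.
   Context: $Cl(V,Q)$ is the real Clifford algebra with $v^2=+Q(v)$, $\mathbb{C}l(V)$ its complexification with complex conjugation $c$, $V^{\mathbb{C}}\subset\mathbb{C}l(V)$, $B$ the bilinear form of $Q$ extended complex-bilinearly. A real structure is an involutive antilinear algebra automorphism of $\mathbb{C}l(V)$ stabilizing $V^{\mathbb{C}}$; it is admissible if it commutes with $c$ (then $V=V_+\oplus V_-$ is a $Q$-orthogonal decomposition). $V_\sigma=\{v\in V^{\mathbb{C}}:\sigma(v)=v\}$; $Q_\sigma(v)=B(\sigma(v),v)$ for $v\in V$. $T$ is the linear antiautomorphism of $\mathbb{C}l(V)$ restricting to the identity on $V$; $\tau_n$ is the normalized trace (the unique linear form with $\tau_n(ab)=\tau_n(ba)$, $\tau_n(1)=1$); the $\sigma$-product is $(a,b)_\sigma=\tau_n(\sigma(T(a))b)$. *)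

(* Defs.v *)
From HB Require Import structures.
From mathcomp Require Import all_boot all_order all_algebra all_field.
From mathcomp Require Import complex.
Set Implicit Arguments. Unset Strict Implicit. Unset Printing Implicit Defensive.
Import Order.TTheory GRing.Theory Num.Theory.
Local Open Scope ring_scope.

(* V = R^n (row vectors), its complexification V^C = C^n with C = R[i]. *)
Definition cplx {R : rcfType} {n : nat} (v : 'rV[R]_n) : 'rV[R[i]]_n :=
  map_mx (fun x => x%:C%C) v.

Definition Qform {R : rcfType} {n : nat} (B : 'M[R]_n) (v : 'rV[R]_n) : R :=
  (v *m B *m v^T) 0 0.

(* B extended complex-bilinearly to V^C. *)
Definition Bc {R : rcfType} {n : nat} (B : 'M[R]_n) (u w : 'rV[R[i]]_n) : R[i] :=
  (u *m map_mx (fun x => x%:C%C) B *m w^T) 0 0.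

(* (A, gam) is the complexified Clifford algebra Cl(V,Q) (x) C, with
   gam : V^C -> A the (C-linear) inclusion of V^C, v^2 = +Q(v):
   A is a finite-dim. complex algebra generated by gam(V^C), satisfying the
   Clifford relation and of dimension 2^n (hence isomorphic to the universal
   Clifford algebra). *)
Definition is_cplx_clifford {R : rcfType} {n : nat} (B : 'M[R]_n)
  (A : falgType R[i]) (gam : 'rV[R[i]]_n -> A) : Prop :=
  [/\ (forall (a : R[i]) u w, gam (a *: u + w) = a *: gam u + gam w),
      (forall u, gam u * gam u = (Bc B u u)%:A),
      agenv (<<[seq gam (delta_mx ord0 i) | i <- enum 'I_n]>>)%VS = fullv
    & \dim (fullv : {vspace A}) = (2 ^ n)%N].

Definition antilinear_algmorph {R : rcfType} (A : falgType R[i]) (f : A -> A) : Prop :=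
  [/\ (forall x y, f (x + y) = f x + f y),
      (forall (a : R[i]) x, f (a *: x) = (conjc a) *: f x),
      (forall x y, f (x * y) = f x * f y)
    & f 1 = 1].

(* c : the complex conjugation of Cl(V) (x) C (fixes Cl(V), i.e. fixes V). *)
Definition is_cplx_conj {R : rcfType} {n : nat} (A : falgType R[i])
  (gam : 'rV[R[i]]_n -> A) (c : A -> A) : Prop :=
  [/\ antilinear_algmorph c, involutive c
    & forall v : 'rV[R]_n, c (gam (cplx v)) = gam (cplx v)].

Definition is_real_structure {R : rcfType} {n : nat} (A : falgType R[i])
  (gam : 'rV[R[i]]_n -> A) (s : A -> A) : Prop :=
  [/\ antilinear_algmorph s, involutive s
    & forall u, exists w, s (gam u) = gam w].

Definition admissible {R : rcfType} (A : falgType R[i]) (c s : A -> A) : Prop :=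
  forall x, s (c x) = c (s x).

Definition is_transpose {R : rcfType} {n : nat} (A : falgType R[i])
  (gam : 'rV[R[i]]_n -> A) (T : A -> A) : Prop :=
  [/\ (forall (a : R[i]) x y, T (a *: x + y) = a *: T x + T y),
      (forall x y, T (x * y) = T y * T x), T 1 = 1, bijective T
    & forall v : 'rV[R]_n, T (gam (cplx v)) = gam (cplx v)].

Definition is_normalized_trace {R : rcfType} (A : falgType R[i]) (tau : A -> R[i]) : Prop :=
  [/\ (forall (a : R[i]) x y, tau (a *: x + y) = a * tau x + tau y),
      (forall x y, tau (x * y) = tau (y * x))
    & tau 1 = 1].

Definition in_Vsigma {R : rcfType} {n : nat} (A : falgType R[i])
  (gam : 'rV[R[i]]_n -> A) (s : A -> A) (u : 'rV[R[i]]_n) : Prop :=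
  s (gam u) = gam u.

Definition in_Vplus {R : rcfType} {n : nat} (A : falgType R[i])
  (gam : 'rV[R[i]]_n -> A) (s : A -> A) (v : 'rV[R]_n) : Prop :=
  in_Vsigma gam s (cplx v).

Definition in_Vminus {R : rcfType} {n : nat} (A : falgType R[i])
  (gam : 'rV[R[i]]_n -> A) (s : A -> A) (v : 'rV[R]_n) : Prop :=
  exists w, in_Vsigma gam s w /\ cplx v = 'i%C *: w.

(* Q_sigma(v) = B(sigma(v), v), where sigma(v) = gam w (w unique). *)
Definition Qsigma_posdef {R : rcfType} {n : nat} (B : 'M[R]_n) (A : falgType R[i])
  (gam : 'rV[R[i]]_n -> A) (s : A -> A) : Prop :=
  forall v : 'rV[R]_n, v != 0 ->
    forall w, s (gam (cplx v)) = gam w -> 0 < Bc B w (cplx v).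

Definition sigma_product {R : rcfType} (A : falgType R[i]) (s T : A -> A)
  (tau : A -> R[i]) (a b : A) : R[i] := tau (s (T a) * b).

(* Main.v *)
Require Import Defs.
From HB Require Import structures.
From mathcomp Require Import all_boot all_order all_algebra all_field.
From mathcomp Require Import complex.
Import Order.TTheory GRing.Theory Num.Theory.
Local Open Scope ring_scope.
From Stdlib Require Classical_Prop.
Set Implicit Arguments. Unset Strict Implicit. Unset Printing Implicit Defensive.


Lemma odd_size_card (n : nat) (l : seq 'I_n) :
  odd (size l) = odd #|[set i | odd (count_mem i l)]|.
Proof.
elim: l => [|x l IH].
  by rewrite /= (_ : [set i | _] = set0) ?cards0 //; apply/setP => i; rewrite !inE.
rewrite /= IH.
set K := [set i | odd (count_mem i l)].
have xKE : (x \in K) = odd (count_mem x l) by rewrite inE.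
case: (boolP (x \in K)) => xK.
  have -> : [set i | odd (count_mem i (x :: l))] = K :\ x.
    apply/setP => i; rewrite !inE /=.
    case: (eqVneq i x) => [->|nix]; first by rewrite /= ?eqxx; move: xK; rewrite xKE; case: odd...
    by []...
  by rewrite (cardsD1 x K) xK add1n /= negbK.
have -> : [set i | odd (count_mem i (x :: l))] = x |: K.
  apply/setP => i; rewrite !inE /=.
  case: (eqVneq i x) => [->|nix]; first by rewrite /= ?eqxx; move: xK; rewrite xKE; case: odd.
  by [].
by rewrite (cardsU1 x K) xK add1n.
Qed.


Lemma pick_j (n : nat) (l : seq 'I_n) : ~~ odd n ->
  (exists i, odd (count_mem i l)) -> exists j, odd (count (predC1 j) l).
Proof.
move=> evn [i0 Hi0].
set K := [set i | odd (count_mem i l)].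
have key j : odd (count (predC1 j) l) = odd #|K| (+) (j \in K).
  have := count_predC (pred1 j) l.
  move/(congr1 odd); rewrite odd_size_card -/K oddD => <-.
  rewrite inE.
  have -> : count (pred1 j) l = count_mem j l by apply: eq_count => y.
  by case: (odd (count_mem j l)); case: (odd (count _ _)).
case: (boolP (odd #|K|)) => oK.
  have : K != setT.
    apply/negP => /eqP KT; move: oK; rewrite KT cardsT card_ord.
    by rewrite (negPf evn).
  move=> KnT.
  case: (boolP [exists j, j \notin K]) => [/existsP [j jK] | /existsPn allK].
    by exists j; rewrite key oK (negPf jK).
  exfalso; apply: (negP KnT); apply/eqP/setP => j; rewrite inE.
  by move: (allK j); rewrite negbK inE in_setT.
exists i0; rewrite key (negPf oK) inE; exact: Hi0.
Qed.


Section Trace.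
Variables (R : rcfType) (A : falgType R[i]) (tau : A -> R[i]).
Hypothesis tauL : forall (a : R[i]) x y, tau (a *: x + y) = a * tau x + tau y.

Lemma tau0 : tau 0 = 0.
Proof.
have := tauL 1 0 0; rewrite scaler0 addr0 mul1r.
by move/(congr1 (fun z => z - tau 0)); rewrite subrr addrK.
Qed.

Lemma tauD x y : tau (x + y) = tau x + tau y.
Proof. by rewrite -[x]scale1r tauL mul1r scale1r. Qed.

Lemma tauZ a x : tau (a *: x) = a * tau x.
Proof. by rewrite -[a *: x]addr0 tauL tau0 addr0. Qed.

Lemma tauN x : tau (- x) = - tau x.
Proof. by rewrite -scaleN1r tauZ mulN1r. Qed.

Lemma tau_sum (I : Type) (r : seq I) (P : pred I) (F : I -> A) :
  tau (\sum_(i <- r | P i) F i) = \sum_(i <- r | P i) tau (F i).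
Proof. exact: (big_morph tau tauD tau0). Qed.
End Trace.

Section Mono.
Variables (R : rcfType) (A : falgType R[i]) (n : nat) (f : 'I_n -> A) (tau : A -> R[i]).
Hypothesis f2 : forall i, f i * f i = 1.
Hypothesis fanti : forall i j, i != j -> f i * f j = - (f j * f i).
Hypothesis tauL : forall (a : R[i]) x y, tau (a *: x + y) = a * tau x + tau y.
Hypothesis tauC : forall x y, tau (x * y) = tau (y * x).
Hypothesis tau1 : tau 1 = 1.

Definition prodl (l : seq 'I_n) : A := \prod_(i <- l) f i.

Lemma prodl_cat l1 l2 : prodl (l1 ++ l2) = prodl l1 * prodl l2.
Proof. by rewrite /prodl big_cat. Qed.

Lemma prodl_cons x l : prodl (x :: l) = f x * prodl l.
Proof. by rewrite /prodl big_cons. Qed.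

Lemma prodl_nil : prodl [::] = 1.
Proof. by rewrite /prodl big_nil. Qed.

Lemma prodl_comm j l :
  f j * prodl l = ((-1) ^+ count (predC1 j) l) *: (prodl l * f j).
Proof.
elim: l => [|x l IH]; first by rewrite prodl_nil mulr1 mul1r expr0 scale1r.
rewrite prodl_cons /=.
case: (eqVneq x j) => [->|nxj].
  by change (nat_of_bool (~~ true)) with 0%N; rewrite add0n [in LHS]IH -scalerAr !mulrA.
change (nat_of_bool (~~ false)) with 1%N.
rewrite mulrA fanti 1?eq_sym // mulNr -[in LHS](mulrA (f x)) IH -scalerAr add1n exprS mulN1r scaleNr !mulrA.
by [].
Qed.

Lemma tau_anticomm x j : f j * x = - (x * f j) -> tau x = 0.
Proof.
move=> H.
have : tau x = - tau x.
  by rewrite -{1}[x]mul1r -(f2 j) -mulrA tauC H mulNr -mulrA f2 mulr1 (tauN tauL).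
move/eqP; rewrite -subr_eq0 opprK -mulr2n mulrn_eq0 /= => /eqP //.
Qed.

Lemma tau_prodl0 l : ~~ odd n -> (exists i, odd (count_mem i l)) -> tau (prodl l) = 0.
Proof.
move=> evn /(pick_j evn) [j oj].
apply: (@tau_anticomm _ j).
by rewrite prodl_comm -signr_odd oj expr1 scaleN1r.
Qed.

Lemma prodl_revK s : prodl (rev s ++ s) = 1.
Proof.
elim: s => [|x s IH]; first by rewrite prodl_nil.
by rewrite rev_cons cat_rcons prodl_cat !prodl_cons (mulrA (f x)) f2 mul1r -prodl_cat.
Qed.

Definition mono (I : {set 'I_n}) := prodl (enum I).

Lemma tau_mono (I J : {set 'I_n}) : ~~ odd n -> tau (prodl (rev (enum I)) * mono J) = (I == J)%:R.
Proof.
move=> evn; rewrite /mono -prodl_cat.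
case: (eqVneq I J) => [<-|nIJ]; first by rewrite prodl_revK tau1.
apply: tau_prodl0 => //.
case: (boolP [exists j, (j \in I) != (j \in J)]) => [/existsP [j Hj] | /existsPn H].
  exists j; rewrite count_cat count_rev !count_uniq_mem ?enum_uniq // !mem_enum.
  by move: Hj; case: (j \in I); case: (j \in J).
exfalso; apply: (negP nIJ); apply/eqP/setP => j.
by move: (H j); rewrite negbK => /eqP.
Qed.
End Mono.


Lemma card_setn n : #|{set 'I_n}| = (2 ^ n)%N.
Proof. by rewrite -cardsT -powersetT card_powerset cardsT card_ord. Qed.

Lemma conj_mul_gt0 (R : rcfType) (x : R[i]) : x != 0 -> 0 < x^*%C * x.
Proof.
move=> nx; rewrite lt0r mulf_eq0 conjc_eq0 (negPf nx) /= mulrC.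
exact: mulcJ_ge0.
Qed.

Section Basis.
Variables (R : rcfType) (A : falgType R[i]) (n : nat) (f : 'I_n -> A) (tau : A -> R[i]).
Variables (s T : A -> A).
Hypothesis f2 : forall i, f i * f i = 1.
Hypothesis fanti : forall i j, i != j -> f i * f j = - (f j * f i).
Hypothesis tauL : forall (a : R[i]) x y, tau (a *: x + y) = a * tau x + tau y.
Hypothesis tauC : forall x y, tau (x * y) = tau (y * x).
Hypothesis tau1 : tau 1 = 1.
Hypothesis TL : forall (a : R[i]) x y, T (a *: x + y) = a *: T x + T y.
Hypothesis TM : forall x y, T (x * y) = T y * T x.
Hypothesis T1 : T 1 = 1.
Hypothesis Tf : forall i, T (f i) = f i.
Hypothesis sD : forall x y, s (x + y) = s x + s y.
Hypothesis sZ : forall (a : R[i]) x, s (a *: x) = (conjc a) *: s x.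
Hypothesis sM : forall x y, s (x * y) = s x * s y.
Hypothesis s1 : s 1 = 1.
Hypothesis sf : forall i, s (f i) = f i.
Hypothesis evn : ~~ odd n.
Hypothesis dimA : \dim (fullv : {vspace A}) = (2 ^ n)%N.

Local Notation prodl := (prodl f).
Local Notation mono := (mono f).

Lemma T0 : T 0 = 0.
Proof.
have := TL 1 0 0; rewrite scaler0 addr0 scale1r.
by move/(congr1 (fun z => z - T 0)); rewrite subrr addrK.
Qed.
Lemma TD x y : T (x + y) = T x + T y.
Proof. by rewrite -[x]scale1r TL !scale1r. Qed.
Lemma TZ a x : T (a *: x) = a *: T x.
Proof. by rewrite -[a *: x]addr0 TL T0 addr0. Qed.
Lemma T_sum (I : Type) (r : seq I) (P : pred I) (F : I -> A) :
  T (\sum_(i <- r | P i) F i) = \sum_(i <- r | P i) T (F i).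
Proof. exact: (big_morph T TD T0). Qed.

Lemma s0 : s 0 = 0.
Proof.
have := sD 0 0; rewrite addr0.
by move/(congr1 (fun z => z - s 0)); rewrite subrr addrK.
Qed.
Lemma s_sum (I : Type) (r : seq I) (P : pred I) (F : I -> A) :
  s (\sum_(i <- r | P i) F i) = \sum_(i <- r | P i) s (F i).
Proof. exact: (big_morph s sD s0). Qed.

Lemma T_prodl l : T (prodl l) = prodl (rev l).
Proof.
elim: l => [|x l IH]; first by rewrite !prodl_nil T1.
by rewrite prodl_cons TM IH Tf rev_cons -cats1 prodl_cat prodl_cons prodl_nil mulr1.
Qed.

Lemma s_prodl l : s (prodl l) = prodl l.
Proof.
elim: l => [|x l IH]; first by rewrite !prodl_nil s1.
by rewrite prodl_cons sM IH sf.
Qed.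

Local Notation N := #|{set 'I_n}|.
Definition Xt : N.-tuple A := [tuple mono (enum_val i) | i < N].
Definition Pt (i : 'I_N) : A := prodl (rev (enum (enum_val i : {set 'I_n}))).

Lemma Xt_nth (i : 'I_N) : Xt`_i = mono (enum_val i).
Proof. by rewrite /Xt nth_mktuple. Qed.

Lemma gram (c k : 'I_N -> R[i]) :
  tau ((\sum_i c i *: Pt i) * (\sum_j k j *: Xt`_j)) = \sum_i c i * k i.
Proof.
rewrite mulr_suml (tau_sum tauL); apply: eq_bigr => i _.
rewrite mulr_sumr (tau_sum tauL) (bigD1 i) //= big1 ?addr0.
  by rewrite -scalerAl -scalerAr !(tauZ tauL) Xt_nth tau_mono // eqxx mulr1 mulrC.
move=> j nji.
rewrite -scalerAl -scalerAr !(tauZ tauL) Xt_nth tau_mono // (inj_eq enum_val_inj).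
by rewrite eq_sym (negPf nji) !mulr0.
Qed.

Lemma Xt_free : free Xt.
Proof.
apply/freeP => k Hk j.
have := gram (fun i => (i == j)%:R) k.
rewrite Hk mulr0 (tau0 tauL) (bigD1 j) //= eqxx mul1r big1 ?addr0 // => i nij.
by rewrite (negPf nij) mul0r.
Qed.

Lemma Xt_span a : a = \sum_i coord Xt i a *: Xt`_i.
Proof.
apply: coord_span.
have : basis_of fullv Xt.
  by rewrite basisEfree Xt_free subvf dimA size_tuple card_setn leqnn.
by move/span_basis ->; rewrite memvf.
Qed.

Lemma sT_Xt a : s (T a) = \sum_i (coord Xt i a)^*%C *: Pt i.
Proof.
rewrite {1}(Xt_span a) T_sum s_sum; apply: eq_bigr => i _.
by rewrite TZ sZ Xt_nth /mono T_prodl s_prodl.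
Qed.

Lemma sigma_pos a : a != 0 -> 0 < tau (s (T a) * a).
Proof.
move=> na.
rewrite sT_Xt [X in tau (_ * X)](Xt_span a) gram.
have [j nj] : exists j, coord Xt j a != 0.
  case: (boolP [exists j, coord Xt j a != 0]) => [/existsP [j Hj]|/existsPn H].
    by exists j.
  exfalso; apply: (negP na); apply/eqP; rewrite (Xt_span a) big1 // => i _.
  by move: (H i); rewrite negbK => /eqP ->; rewrite scale0r.
rewrite (bigD1 j) //=.
apply: (lt_le_trans (conj_mul_gt0 nj)).
rewrite lerDl; apply: sumr_ge0 => i _.
by rewrite mulrC; apply: mulcJ_ge0.
Qed.
End Basis.


Section Bil.
Variables (R : rcfType) (n : nat) (B : 'M[R]_n).
Hypothesis Bsym : B^T = B.
Local Notation Bc := (Bc B).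

Lemma BcDl u v w : Bc (u + v) w = Bc u w + Bc v w.
Proof. by rewrite /Bc !mulmxDl mxE. Qed.
Lemma BcZl a u w : Bc (a *: u) w = a * Bc u w.
Proof. by rewrite /Bc -!scalemxAl mxE. Qed.
Lemma BcDr u v w : Bc u (v + w) = Bc u v + Bc u w.
Proof. by rewrite /Bc linearD /= mulmxDr mxE. Qed.
Lemma BcZr a u w : Bc u (a *: w) = a * Bc u w.
Proof. by rewrite /Bc linearZ /= -scalemxAr mxE. Qed.
Lemma BcNl u w : Bc (- u) w = - Bc u w.
Proof. by rewrite -scaleN1r BcZl mulN1r. Qed.
Lemma BcNr u w : Bc u (- w) = - Bc u w.
Proof. by rewrite -scaleN1r BcZr mulN1r. Qed.
Lemma Bc0l w : Bc 0 w = 0.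
Proof. by rewrite -(scale0r 0) BcZl mul0r. Qed.
Lemma Bc0r w : Bc w 0 = 0.
Proof. by rewrite -(scale0r 0) BcZr mul0r. Qed.
Lemma Bc_sym u w : Bc u w = Bc w u.
Proof.
have tr (M : 'M[R[i]]_1) : M 0 0 = M^T 0 0 by rewrite mxE.
rewrite /Bc [LHS]tr !trmx_mul trmxK map_trmx Bsym mulmxA //.
Qed.
Lemma Bc_suml (I : Type) (r : seq I) (P : pred I) (F : I -> 'rV[R[i]]_n) w :
  Bc (\sum_(i <- r | P i) F i) w = \sum_(i <- r | P i) Bc (F i) w.
Proof. exact: (big_morph (fun u => Bc u w) (fun u v => BcDl u v w) (Bc0l w)). Qed.

Lemma Bc_cplx x y : Bc (cplx x) (cplx y) = ((x *m B *m y^T) 0 0)%:C%C.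
Proof.
rewrite /Bc /cplx map_trmx.
rewrite -(map_mxM (real_complex R)) -(map_mxM (real_complex R)) mxE //.
Qed.

Lemma Bc_Qform v : Bc (cplx v) (cplx v) = (Qform B v)%:C%C.
Proof. by rewrite Bc_cplx. Qed.
End Bil.


Section Cl.
Variables (R : rcfType) (n : nat) (B : 'M[R]_n) (A : falgType R[i]).
Variables (gam : 'rV[R[i]]_n -> A).
Hypotheses (Bsym : B^T = B) (detB : \det B != 0).
Hypothesis gL : forall (a : R[i]) u w, gam (a *: u + w) = a *: gam u + gam w.
Hypothesis gsq : forall u, gam u * gam u = (Bc B u u)%:A.

Lemma g0 : gam 0 = 0.
Proof.
have := gL 1 0 0; rewrite scaler0 addr0 scale1r.
by move/(congr1 (fun z => z - gam 0)); rewrite subrr addrK.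
Qed.
Lemma gD u w : gam (u + w) = gam u + gam w.
Proof. by rewrite -[u]scale1r gL !scale1r. Qed.
Lemma gZ a u : gam (a *: u) = a *: gam u.
Proof. by rewrite -[a *: u]addr0 gL g0 addr0. Qed.
Lemma gN u : gam (- u) = - gam u.
Proof. by rewrite -scaleN1r gZ scaleN1r. Qed.
Lemma gB u w : gam (u - w) = gam u - gam w.
Proof. by rewrite gD gN. Qed.

Lemma addr_cancel2 (V : zmodType) (a b x y z : V) :
  a + x + (y + b) = a + z + (z + b) -> x + y = z + z.
Proof.
have E p q : a + p + (q + b) = a + (p + q) + b by rewrite !addrA.
by rewrite !E => /addIr /addrI.
Qed.

Lemma polar u w : gam u * gam w + gam w * gam u = (Bc B u w *+ 2)%:A.
Proof.
have H := gsq (u + w).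
rewrite gD mulrDl !mulrDr !gsq (BcDl B) !(BcDr B) (Bc_sym Bsym w u) !scalerDl in H.
by rewrite (addr_cancel2 H) -scalerMnl mulr2n.
Qed.

Lemma scalA_inj (a b : R[i]) : a%:A = b%:A :> A -> a = b.
Proof.
move/eqP; rewrite -subr_eq0 -scalerBl scaler_eq0 oner_eq0 orbF subr_eq0.
by move/eqP.
Qed.

Lemma nondeg u : (forall w, Bc B u w = 0) -> u = 0.
Proof.
move=> H.
set K := map_mx (fun x => x%:C%C) B.
have uK : u *m K = 0.
  apply/rowP => j; have := H (delta_mx 0 j).
  rewrite /Bc trmx_delta -colE !mxE => ->.
  by [].
have Ku : K \in unitmx.
  rewrite unitmxE /K (det_map_mx (real_complex R)) unitfE.
  by apply: contra detB => /eqP [] ->.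
by rewrite -(mulmxK Ku u) uK mul0mx.
Qed.

Lemma gam_inj u w : gam u = gam w -> u = w.
Proof.
move=> E; apply/eqP; rewrite -subr_eq0; apply/eqP; apply: nondeg => z.
have := polar (u - w) z.
rewrite gB E subrr mul0r mulr0 addr0 => /esym /eqP.
rewrite scaler_eq0 oner_eq0 orbF mulrn_eq0 /=.
by move/eqP.
Qed.
End Cl.


Lemma lt0C (R : rcfType) (q : R) : (0 < q%:C%C) = (0 < q).
Proof. by rewrite ltcE /= eqxx. Qed.
Lemma ltC0 (R : rcfType) (q : R) : (q%:C%C < 0) = (q < 0).
Proof. by rewrite ltcE /= eqxx. Qed.
Lemma le0C (R : rcfType) (q : R) : (0 <= q%:C%C) = (0 <= q).
Proof. by rewrite lecE /= eqxx. Qed.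

Lemma conji (R : rcfType) : ('i%C)^*%C = - 'i%C :> R[i].
Proof. by rewrite /conjc /=; simpc. Qed.
Lemma conj_ir (R : rcfType) (r : R) : ('i%C * r%:C%C)^*%C = - ('i%C * r%:C%C) :> R[i].
Proof. rewrite /real_complex_def /=. simpc. by []. Qed.
Lemma conjNi (R : rcfType) : (- 'i%C)^*%C = 'i%C :> R[i].
Proof. by rewrite /conjc /=; simpc. Qed.

Section Cplx.
Variables (R : rcfType) (n : nat).
Implicit Types (x y : 'rV[R]_n).
Lemma cplxD x y : cplx (x + y) = cplx x + cplx y.
Proof. by apply/rowP => j; rewrite !mxE rmorphD. Qed.
Lemma cplxN x : cplx (- x) = - cplx x.
Proof. by apply/rowP => j; rewrite !mxE rmorphN. Qed.
Lemma cplxB x y : cplx (x - y) = cplx x - cplx y.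
Proof. by rewrite cplxD cplxN. Qed.
Lemma cplxZ (r : R) x : cplx (r *: x) = r%:C%C *: cplx x.
Proof. by apply/rowP => j; rewrite !mxE rmorphM. Qed.
Lemma cplx0 : cplx (0 : 'rV[R]_n) = 0.
Proof. by apply/rowP => j; rewrite !mxE. Qed.
Lemma cplx_eq0 x : cplx x = 0 -> x = 0.
Proof.
move=> H; apply/rowP => j; have := congr1 (fun M : 'rV[R[i]]_n => M 0 j) H.
by rewrite !mxE => -[].
Qed.
Lemma cplx_dec (u : 'rV[R[i]]_n) :
  u = cplx (map_mx (@complex.Re R) u) + 'i%C *: cplx (map_mx (@complex.Im R) u).
Proof. by apply/rowP => j; rewrite !mxE [LHS]complexE. Qed.
Lemma cplx_dec_inj (a b a' b' : 'rV[R]_n) :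
  cplx a + 'i%C *: cplx b = cplx a' + 'i%C *: cplx b' -> a = a' /\ b = b'.
Proof.
have E (p q : R) : p%:C%C + 'i%C * q%:C%C = (p +i* q)%C.
  by simpc.
move=> H; split; apply/rowP => j; have := congr1 (fun M : 'rV[R[i]]_n => M 0 j) H;
  by rewrite !mxE !E => -[].
Qed.
End Cplx.

Section Sig.
Variables (R : rcfType) (n : nat) (B : 'M[R]_n) (A : falgType R[i]).
Variables (gam : 'rV[R[i]]_n -> A) (c s T : A -> A) (tau : A -> R[i]).
Hypotheses (Bsym : B^T = B) (detB : \det B != 0).
Hypothesis gL : forall (a : R[i]) u w, gam (a *: u + w) = a *: gam u + gam w.
Hypothesis gsq : forall u, gam u * gam u = (Bc B u u)%:A.
Hypothesis cD : forall x y, c (x + y) = c x + c y.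
Hypothesis cZ : forall (a : R[i]) x, c (a *: x) = (conjc a) *: c x.
Hypothesis cfix : forall v : 'rV[R]_n, c (gam (cplx v)) = gam (cplx v).
Hypothesis sD : forall x y, s (x + y) = s x + s y.
Hypothesis sZ : forall (a : R[i]) x, s (a *: x) = (conjc a) *: s x.
Hypothesis sM : forall x y, s (x * y) = s x * s y.
Hypothesis s1 : s 1 = 1.
Hypothesis sK : involutive s.
Hypothesis sV : forall u, exists w, s (gam u) = gam w.
Hypothesis adm : forall x, s (c x) = c (s x).
Hypothesis TL : forall (a : R[i]) x y, T (a *: x + y) = a *: T x + T y.
Hypothesis Tfix : forall v : 'rV[R]_n, T (gam (cplx v)) = gam (cplx v).
Hypothesis tauL : forall (a : R[i]) x y, tau (a *: x + y) = a * tau x + tau y.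
Hypothesis tau1 : tau 1 = 1.
Hypothesis TM : forall x y, T (x * y) = T y * T x.
Hypothesis T1 : T 1 = 1.
Hypothesis tauC : forall x y, tau (x * y) = tau (y * x).
Hypothesis evn : ~~ odd n.
Hypothesis dimA : \dim (fullv : {vspace A}) = (2 ^ n)%N.

Local Notation gD := (gD gL).
Local Notation gZ := (gZ gL).
Local Notation gN := (gN gL).
Local Notation gB := (gB gL).
Local Notation Bc := (Bc B).

Lemma sN x : s (- x) = - s x.
Proof. by rewrite -scaleN1r sZ rmorphN1 scaleN1r. Qed.
Lemma sB x y : s (x - y) = s x - s y.
Proof. by rewrite sD sN. Qed.

Lemma c_gam u : c (gam u) =
  gam (cplx (map_mx (@complex.Re R) u) - 'i%C *: cplx (map_mx (@complex.Im R) u)).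
Proof.
by rewrite {1}(cplx_dec u) gD gZ cD cZ !cfix gB gZ conji scaleNr.
Qed.

Lemma real_of_cfix w : c (gam w) = gam w -> w = cplx (map_mx (@complex.Re R) w).
Proof.
rewrite c_gam => H0.
have H1 := gam_inj Bsym detB gL gsq H0.
have Ew := cplx_dec w.
move: H1 Ew; set x := cplx (map_mx _ w); set y := cplx (map_mx _ w) => H1 Ew.
have H : - ('i%C *: y) = 'i%C *: y.
  by apply: (@addrI _ x); rewrite H1 -Ew.
have y0 : y = 0.
  have : ('i%C *: y) *+ 2 = 0 by rewrite mulr2n -{1}H addNr.
  rewrite -scaler_nat scalerA => /eqP; rewrite scaler_eq0 mulf_eq0 pnatr_eq0 /=.
  case/orP => [/eqP/(congr1 (@complex.Im R))/eqP|/eqP //]; by rewrite /= oner_eq0.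
by rewrite Ew y0 scaler0 addr0.
Qed.

Lemma s_real v w : s (gam (cplx v)) = gam w -> w = cplx (map_mx (@complex.Re R) w).
Proof.
move=> H; apply: real_of_cfix.
by rewrite -H -adm cfix.
Qed.

Lemma sbil a a' b b' : s (gam a) = gam a' -> s (gam b) = gam b' ->
  Bc a' b' = (Bc a b)^*%C.
Proof.
move=> Ha Hb.
have := congr1 s (polar Bsym gL gsq a b).
rewrite sD !sM Ha Hb (polar Bsym gL gsq a' b') sZ s1 => /scalA_inj.
rewrite rmorphMn => /eqP; rewrite -subr_eq0 -mulrnBl mulrn_eq0 /= subr_eq0.
by move/eqP.
Qed.

Lemma half_sum (V : lmodType R[i]) (x y : V) :
  ((2^-1 : R)%:C%C *: (x + y) + (2^-1 : R)%:C%C *: (x - y) = x) /\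
  ((2^-1 : R)%:C%C *: (x + y) - (2^-1 : R)%:C%C *: (x - y) = y).
Proof.
have h : (2^-1 : R)%:C%C * 2%:R = 1.
  by rewrite -(rmorph_nat (real_complex R)) -rmorphM mulVf ?pnatr_eq0 // rmorph1.
split.
  by rewrite -scalerDr addrACA subrr addr0 -mulr2n -scaler_nat scalerA h scale1r.
rewrite -scalerBr.
have -> : (x + y) - (x - y) = y + y by rewrite opprB [LHS]addrC addrA subrK.
rewrite -mulr2n -scaler_nat scalerA.
by rewrite h scale1r.
Qed.

Lemma Vminus_s v : in_Vminus gam s v -> s (gam (cplx v)) = - gam (cplx v).
Proof. by case=> w [Hw ->]; rewrite gZ sZ Hw conji scaleNr. Qed.

Lemma s_Vminus v : s (gam (cplx v)) = - gam (cplx v) -> in_Vminus gam s v.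
Proof.
move=> H; exists ((- 'i%C) *: cplx v); split.
  by rewrite /in_Vsigma !gZ sZ H conjNi scalerN scaleNr.
by rewrite scalerA mulrN -expr2 sqr_i opprK scale1r.
Qed.

Definition P0 := (forall v : 'rV[R]_n, v != 0 -> in_Vplus gam s v -> 0 < Qform B v) /\
       (forall v : 'rV[R]_n, v != 0 -> in_Vminus gam s v -> Qform B v < 0).

Lemma Qform0 : Qform B 0 = 0.
Proof. by rewrite /Qform !mul0mx mxE. Qed.

Lemma pos_comb (H0 : P0) a b :
  in_Vplus gam s a -> in_Vminus gam s b -> (a != 0) || (b != 0) ->
  0 < Bc (cplx a) (cplx a) - Bc (cplx b) (cplx b).
Proof.
case: H0 => Pp Pm Ha Hb nab; rewrite !Bc_Qform -rmorphB lt0C subr_gt0.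
have qa : 0 <= Qform B a.
  by case: (eqVneq a 0) => [->|na]; [rewrite Qform0 | exact: ltW (Pp a na Ha)].
have qb : Qform B b <= 0.
  by case: (eqVneq b 0) => [->|nb]; [rewrite Qform0 | exact: ltW (Pm b nb Hb)].
case/orP: nab => [na|nb].
  exact: le_lt_trans qb (Pp a na Ha).
exact: lt_le_trans (Pm b nb Hb) qa.
Qed.

Lemma E1 : Qsigma_posdef B gam s -> P0.
Proof.
move=> P1; split => v nv.
  by move=> Hp; have := P1 v nv (cplx v) Hp; rewrite Bc_Qform lt0C.
move/Vminus_s => Hm.
have H : s (gam (cplx v)) = gam (- cplx v) by rewrite Hm gN.
have := P1 v nv (- cplx v) H.
by rewrite BcNl Bc_Qform oppr_gt0 ltC0.
Qed.

Lemma tau_scal k : tau (k%:A) = k.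
Proof. by rewrite (tauZ tauL) tau1 mulr1. Qed.

Lemma E3 : (forall a : A, a != 0 -> 0 < sigma_product s T tau a a) -> P0.
Proof.
move=> P3.
have gne v : v != 0 -> gam (cplx v) != 0.
  apply: contra => /eqP H; apply/eqP; apply: cplx_eq0.
  by apply: (gam_inj Bsym detB gL gsq); rewrite H g0.
split => v nv.
  move=> Hp; have := P3 _ (gne v nv).
  by rewrite /sigma_product Tfix Hp gsq tau_scal Bc_Qform lt0C.
move/Vminus_s => Hm; have := P3 _ (gne v nv).
by rewrite /sigma_product Tfix Hm mulNr (tauN tauL) gsq tau_scal Bc_Qform oppr_gt0 ltC0.
Qed.

Lemma H1 : P0 -> Qsigma_posdef B gam s.
Proof.
move=> HP v nv w Hw.
have wr := s_real Hw.
move: wr; set p := map_mx _ w => wr.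
have Hw2 : s (gam w) = gam (cplx v) by rewrite -Hw sK.
set a := (2^-1 : R) *: (v + p).
set b := (2^-1 : R) *: (v - p).
have ca : cplx a = (2^-1 : R)%:C%C *: (cplx v + w) by rewrite cplxZ cplxD -wr.
have cb : cplx b = (2^-1 : R)%:C%C *: (cplx v - w) by rewrite cplxZ cplxB -wr.
have Ha : in_Vplus gam s a.
  by rewrite /in_Vplus /in_Vsigma ca !gZ sZ conjc_real !gD sD Hw Hw2 addrC.
have Hb : in_Vminus gam s b.
  apply: s_Vminus.
  by rewrite cb !gZ sZ conjc_real !gB sB Hw Hw2 -scalerN opprB.
have [ev ew] := half_sum (cplx v) w.
have nab : (a != 0) || (b != 0).
  case: (eqVneq a 0) => [a0|//]; case: (eqVneq b 0) => [b0|//].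
  exfalso; move/negP: nv; apply; apply/eqP.
  by apply: cplx_eq0; rewrite -ev -ca -cb a0 b0 cplx0 addr0.
have := pos_comb HP Ha Hb nab.
suff -> : Bc w (cplx v) = Bc (cplx a) (cplx a) - Bc (cplx b) (cplx b) by [].
rewrite ca cb.
move: ev ew; set X := _ *: (cplx v + w); set Y := _ *: (cplx v - w) => ev ew.
rewrite -[w]ew -[cplx v]ev.
rewrite BcDl BcNl !BcDr (Bc_sym Bsym Y X).
by rewrite opprD addrA addrK.
Qed.

Lemma H2 : P0 ->
  (forall u : 'rV[R[i]]_n, u != 0 -> in_Vsigma gam s u -> 0 < Bc u u).
Proof.
move=> HP u nu Hu.
have Eu := cplx_dec u.
move: Eu; set x := map_mx _ u; set y := map_mx _ u => Eu.
have [w1 Hw1] := sV (cplx x).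
have [w2 Hw2] := sV (cplx y).
have r1 := s_real Hw1; have r2 := s_real Hw2.
move: r1 r2; set px := map_mx _ w1; set py := map_mx _ w2 => r1 r2.
rewrite r1 in Hw1; rewrite r2 in Hw2.
have E : cplx px + 'i%C *: cplx (- py) = cplx x + 'i%C *: cplx y.
  apply: (gam_inj Bsym detB gL gsq).
  rewrite -Eu -Hu [in RHS]Eu !gD !gZ sD sZ Hw1 Hw2 conji scaleNr cplxN gN scalerN.
  by [].
have [epx epy] := cplx_dec_inj E.
have Hx : s (gam (cplx x)) = gam (cplx x) by rewrite Hw1 epx.
have Hy : s (gam (cplx y)) = - gam (cplx y) by rewrite Hw2 -[py]opprK epy cplxN gN.
have Hy' : s (gam (cplx y)) = gam (- cplx y) by rewrite Hy gN.
have o := sbil Hx Hy'.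
rewrite BcNr Bc_cplx conjc_real in o.
have q0 : Bc (cplx x) (cplx y) = 0.
  rewrite Bc_cplx; move: o; set q := _%:C%C => o.
  have : q *+ 2 = 0 by rewrite mulr2n -{1}o addNr.
  by move/eqP; rewrite mulrn_eq0 /= => /eqP.
have nxy : (x != 0) || (y != 0).
  case: (eqVneq x 0) => [x0|//]; case: (eqVneq y 0) => [y0|//].
  exfalso; move/negP: nu; apply; apply/eqP.
  by rewrite Eu x0 y0 cplx0 scaler0 addr0.
have := pos_comb HP Hx (s_Vminus Hy) nxy.
suff -> : Bc u u = Bc (cplx x) (cplx x) - Bc (cplx y) (cplx y) by [].
rewrite [in LHS]Eu BcDl !BcDr !BcZl !BcZr (Bc_sym Bsym (cplx y) (cplx x)) q0.
by rewrite !mulr0 add0r addr0 mulrA -expr2 sqr_i mulN1r.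
Qed.

Lemma Tgam u : T (gam u) = gam u.
Proof.
have Eu := cplx_dec u.
move: Eu; set x := cplx _; set y := cplx _ => Eu.
by rewrite Eu gD gZ (TD TL) (TZ TL) !Tfix.
Qed.

Local Notation W := (in_Vsigma gam s).

Lemma WD u v : W u -> W v -> W (u + v).
Proof. by rewrite /in_Vsigma !gD sD => -> ->. Qed.
Lemma WB u v : W u -> W v -> W (u - v).
Proof. by rewrite /in_Vsigma !gB sB => -> ->. Qed.
Lemma WZr a u : a^*%C = a -> W u -> W (a *: u).
Proof. by rewrite /in_Vsigma !gZ sZ => -> ->. Qed.
Lemma W0 : W 0.
Proof.
rewrite /in_Vsigma (g0 gL); have := sD 0 0; rewrite addr0.
by move/(congr1 (fun z => z - s 0)); rewrite subrr addrK.
Qed.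
Lemma W_sum k (F : 'I_k -> 'rV[R[i]]_n) : (forall j, W (F j)) -> W (\sum_(j < k) F j).
Proof.
move=> HF; elim/big_ind: _ => //; [exact: W0 | by move=> ? ? ; apply: WD].
Qed.
Lemma Breal u v : W u -> W v -> (Bc u v)^*%C = Bc u v.
Proof. by move=> Hu Hv; rewrite -(sbil Hu Hv). Qed.

Lemma W_dec v : exists x y, [/\ W x, W y & v = x + 'i%C *: y].
Proof.
have [w Hw] := sV v.
have Hw2 : s (gam w) = gam v by rewrite -Hw sK.
have h2 : ((2^-1 : R)%:C%C)^*%C = (2^-1 : R)%:C%C by rewrite conjc_real.
exists ((2^-1 : R)%:C%C *: (v + w)), (('i%C * (2^-1 : R)%:C%C) *: (w - v)); split.
- by apply: WZr h2 _; rewrite /in_Vsigma !gD sD Hw Hw2 addrC.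
  rewrite /in_Vsigma !gZ sZ !gB sB Hw Hw2 conj_ir.
  by rewrite -opprB scalerN scaleNr opprK.
- have [e _] := half_sum v w.
  rewrite scalerA mulrA -expr2 sqr_i mulN1r scaleNr -scalerN opprB.
  by rewrite e.
Qed.
Lemma GS : (forall u : 'rV[R[i]]_n, u != 0 -> W u -> 0 < Bc u u) ->
  forall k, (k <= n)%N -> exists es : seq 'rV[R[i]]_n,
    [/\ size es = k, (forall u, u \in es -> W u) &
       forall i j, (i < k)%N -> (j < k)%N -> Bc es`_i es`_j = (i == j)%:R].
Proof.
move=> posW; elim=> [|k IH] kn.
  by exists [::]; split.
have [es [sz Wes on]] := IH (ltnW kn).
have [u [Wu nu]] : exists u, W u /\ u \notin <<es>>%VS.
  case: (Classical_Prop.classic (exists u, W u /\ u \notin <<es>>%VS)) => // H.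
  exfalso.
  have allin u : W u -> u \in <<es>>%VS.
    move=> Wu; case: (boolP (u \in <<es>>%VS)) => // nu.
    by case: H; exists u.
  have : (fullv <= <<es>>)%VS.
    apply/subvP => v _; have [x [y [Wx Wy ->]]] := W_dec v.
    by apply: memvD; [apply: allin | apply: memvZ; apply: allin].
  move/dimvS; rewrite dimvf /dim /= mul1n.
  move/leq_trans => /(_ _ (dim_span es)); rewrite sz => nk.
  by move: (leq_trans kn nk); rewrite ltnn.
have esj (j : 'I_k) : es`_j \in es by rewrite mem_nth // sz.
set u' := u - \sum_(j < k) Bc u es`_j *: es`_j.
have Wu' : W u'.
  apply: WB => //; apply: W_sum => j; apply: WZr; last exact: Wes.
  by apply: Breal => //; apply: Wes.
have nu' : u' != 0.
  apply: contra nu; rewrite subr_eq0 => /eqP ->.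
  by apply: memv_suml => j _; apply: memvZ; apply: memv_span.
have orth i : (i < k)%N -> Bc u' es`_i = 0.
  move=> ik; rewrite /u' BcDl BcNl Bc_suml.
  rewrite (bigD1 (Ordinal ik)) //= BcZl on // eqxx mulr1 big1 ?addr0 ?subrr //.
  move=> j nji; rewrite BcZl on //.
  have -> : (nat_of_ord j == i) = false.
    by apply/negP => /eqP eji; move: nji; rewrite -val_eqE /= eji eqxx.
  by rewrite mulr0.
have [r [r0 Er]] : exists r, 0 < r /\ Bc u' u' = r%:C%C.
  move: (posW u' nu' Wu'); case: (Bc u' u') => p q.
  rewrite ltcE /= => /andP [/eqP q0 p0]; exists p; split => //.
  by rewrite q0.
set t := (Num.sqrt r)^-1.
have tt : t * t * r = 1.
  rewrite /t -expr2 exprVn sqr_sqrtr ?ltW // mulVf //.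
  by rewrite gt_eqF.
set e := t%:C%C *: u'.
have We : W e by apply: WZr => //; rewrite conjc_real.
have ee : Bc e e = 1.
  by rewrite BcZl BcZr Er -!rmorphM mulrA tt rmorph1.
have ei i : (i < k)%N -> Bc e es`_i = 0.
  by move=> ik; rewrite BcZl orth // mulr0.
exists (e :: es); split.
- by rewrite /= sz.
- by move=> v; rewrite inE => /orP [/eqP ->|]; [exact: We | exact: Wes].
- case=> [|i] [|j] /= ik jk //.
  + by rewrite ei.
  + by rewrite (Bc_sym Bsym) ei.
  + by rewrite on.
Qed.

Lemma H3 : (forall u : 'rV[R[i]]_n, u != 0 -> W u -> 0 < Bc u u) ->
  forall a : A, a != 0 -> 0 < sigma_product s T tau a a.
Proof.
move=> posW a na.
have [es [sz Wes on]] := GS posW (leqnn n).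
pose f (i : 'I_n) := gam es`_i.
have esi (i : 'I_n) : es`_i \in es by rewrite mem_nth // sz.
have f2 i : f i * f i = 1 by rewrite /f gsq on // eqxx scale1r.
have fanti i j : i != j -> f i * f j = - (f j * f i).
  move=> nij; apply/eqP; rewrite -addr_eq0; apply/eqP.
  rewrite /f (polar Bsym gL gsq) on //.
  have -> : (nat_of_ord i == j) = false by apply/negbTE.
  by rewrite mul0rn scale0r.
have Tf i : T (f i) = f i by rewrite /f Tgam.
have sf i : s (f i) = f i by apply: Wes.
exact: (sigma_pos f2 fanti tauL tauC tau1 TL TM T1 Tf sD sZ sM s1 sf evn dimA na).
Qed.
End Sig.


Unset Implicit Arguments.
Theorem proposition6 (R : rcfType) (n : nat) (B : 'M[R]_n)
  (A : falgType R[i]) (gam : 'rV[R[i]]_n -> A)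
  (c sigma T : A -> A) (tau : A -> R[i]) :
  ~~ odd n -> B^T = B -> \det B != 0 ->
  is_cplx_clifford B gam ->
  is_cplx_conj gam c ->
  is_real_structure gam sigma -> admissible c sigma ->
  is_transpose gam T ->
  is_normalized_trace tau ->
  [<-> (* (1) *)
       (forall v : 'rV[R]_n, v != 0 -> in_Vplus gam sigma v -> 0 < Qform B v) /\
       (forall v : 'rV[R]_n, v != 0 -> in_Vminus gam sigma v -> Qform B v < 0);
       (* (2) *)
       Qsigma_posdef B gam sigma;
       (* (3) *)
       (forall u : 'rV[R[i]]_n, u != 0 -> in_Vsigma gam sigma u -> 0 < Bc B u u);
       (* (4) *)
       (forall a : A, a != 0 -> 0 < sigma_product sigma T tau a a)].
Proof.
move=> evn Bsym detB [gL gsq _ dimA] [[cD cZ cM c1] cK cfix] [[sD sZ sM s1] sK sV] adm.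
move=> [TL TM T1 _ Tfix] [tauL tauC tau1].
tfae.
- by move=> h; apply: (H1 (c := c)).
- by move=> h; apply: (H2 (c := c)) => //; apply: E1.
- by move=> h; apply: (H3 (B := B) (gam := gam)).
- by move=> h; apply: (E3 (T := T) (tau := tau)).
Qed.
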